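(* Let $k\ge1$, and let $\mathcal P=\{p_1,\dots,p_{k^2}\}$ be a family of real polynomials in the commuting variables $x_1,\dots,x_{2k^2}$ admitting an nc representation $p(X,Y)$. Suppose a term $a\,x_i^sx_j^t$ with $a\ne0$ and positive integers $s,t$ occurs in some polynomial of the family, and that for some $c\in\{1,\dots,k\}$ one of $x_i,x_j$ is the $(c,c)$ entry of $X$ and the other is the $(c,c)$ entry of $Y$. Then that polynomial is in position $(c,c)$ of the array $p(X,Y)$.
   Context: The family $\mathcal P$ admits an nc representation $p(X,Y)$ if there are $k\times k$ matrices $X,Y$ whose $2k^2$ entries are the variables $x_1,\dots,x_{2k^2}$, each used exactly once, and a noncommutative polynomial $p$ in two letters with real coefficients such that the matrix $p(X,Y)$ is a $k\times k$ array whose entries are $p_1,\dots,p_{k^2}$, each exactly once. A ''term'' means a monomial with its nonzero coefficient after collecting like terms. *)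

(* Defs.v *)
From HB Require Import structures.
From mathcomp Require Import all_boot all_order all_algebra.
From mathcomp Require Import mpoly.
Set Implicit Arguments. Unset Strict Implicit. Unset Printing Implicit Defensive.
Import Order.TTheory GRing.Theory Num.Theory.
Local Open Scope ring_scope.

(* A noncommutative polynomial in two letters X (false) and Y (true) is a
   finite formal sum of coefficients times words; we represent it as a list of
   (coefficient, word) pairs. *)
Definition ncpoly (R : Type) := seq (R * seq bool).

Definition word_eval (A : pzRingType) (k : nat) (X Y : 'M[A]_k) (w : seq bool)
  : 'M[A]_k :=
  foldr (fun b M => (if b then Y else X) *m M) 1%:M w.

Definition nc_eval (R : comNzRingType) (n k : nat) (p : ncpoly R)
  (X Y : 'M[{mpoly R[n]}]_k) : 'M[{mpoly R[n]}]_k :=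
  \sum_(t <- p) (t.1%:MP *: word_eval X Y t.2).

Definition var_matrices (R : comNzRingType) (k : nat)
  (X Y : 'M[{mpoly R[2 * k ^ 2]}]_k) : Prop :=
  exists f : bool * 'I_k * 'I_k -> 'I_(2 * k ^ 2),
    bijective f /\
    (forall i j, X i j = 'X_(f (false, i, j))) /\
    (forall i j, Y i j = 'X_(f (true, i, j))).

Definition nc_representation (R : comNzRingType) (k : nat)
  (P : 'I_(k ^ 2) -> {mpoly R[2 * k ^ 2]})
  (X Y : 'M[{mpoly R[2 * k ^ 2]}]_k) (p : ncpoly R)
  (pos : 'I_k * 'I_k -> 'I_(k ^ 2)) : Prop :=
  var_matrices X Y /\ bijective pos /\
  (forall r s, nc_eval p X Y r s = P (pos (r, s))).

Definition mono2 (n : nat) (i j : 'I_n) (s t : nat) : 'X_{1..n} :=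
  mnm_add (mnm_muln (mnm1 i) s) (mnm_muln (mnm1 j) t).

(* Main.v *)
Require Import Defs.
From HB Require Import structures.
From mathcomp Require Import all_boot all_order all_algebra.
From mathcomp Require Import mpoly.
Import Order.TTheory GRing.Theory Num.Theory.
Local Open Scope ring_scope.

Lemma Xmul_nz (R : realFieldType) n (v : 'I_n) (q : {mpoly R[n]}) m :
  ('X_v * q)@_m != 0 -> exists m', m = (U_(v) + m')%MM /\ q@_m' != 0.
Proof.
rewrite mcoeffM => H.
case: (boolP [exists k : 'X_{1..n < (mdeg m).+1, (mdeg m).+1},
   (m == (k.1 + k.2)%MM) && ('X_v@_(k.1 : 'X_{1..n}) * q@_(k.2 : 'X_{1..n}) != 0)]).
  move/existsP=> [k /andP [/eqP Hm Hnz]].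
  have Hk1 : (k.1 : 'X_{1..n}) = U_(v)%MM.
    move: Hnz; rewrite mcoeffX; case E: (U_(v)%MM == (k.1 : 'X_{1..n})).
      by move/eqP: E.
    by rewrite mul0r eqxx.
  exists k.2; split; first by apply: (etrans Hm); rewrite Hk1.
  by move: Hnz; rewrite Hk1 mcoeffX eqxx mul1r.
move=> Hn; exfalso; move/eqP: H; apply; apply: big1 => k Hk.
apply/eqP; apply: contraNT Hn => Hnz; apply/existsP; exists k.
by rewrite Hk Hnz.
Qed.

Lemma mX_inj (R : realFieldType) n (u v : 'I_n) :
  ('X_u : {mpoly R[n]}) = 'X_v -> u = v.
Proof.
move=> H; have := mcoeffXU R u u; rewrite H mcoeffXU eqxx.
by case: eqP => // _ /eqP; rewrite eq_sym oner_eq0.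
Qed.

Theorem lemma2p18 (R : realFieldType) (k : nat) (hk : (1 <= k)%N)
  (P : 'I_(k ^ 2) -> {mpoly R[2 * k ^ 2]})
  (X Y : 'M[{mpoly R[2 * k ^ 2]}]_k) (p : ncpoly R)
  (pos : 'I_k * 'I_k -> 'I_(k ^ 2))
  (hrep : nc_representation P X Y p pos)
  (l : 'I_(k ^ 2)) (i j : 'I_(2 * k ^ 2)) (s t : nat)
  (hs : (0 < s)%N) (ht : (0 < t)%N)
  (hterm : (P l)@_(mono2 i j s t) != 0)
  (c : 'I_k)
  (hc : (X c c = 'X_i /\ Y c c = 'X_j) \/ (X c c = 'X_j /\ Y c c = 'X_i)) :
  pos (c, c) = l.
Proof.
case: hrep => [[f [[g fK gK] [HX HY]]] [[pinv posK posK'] Hev]].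
have finj : injective f := can_inj fK.
have Hij : forall v, (v == i) || (v == j) -> exists b, v = f (b, c, c).
  move=> v /orP [] /eqP ->; case: hc => [[H1 H2]|[H1 H2]].
  - exists false; apply: (@mX_inj R); by rewrite -H1 HX.
  - exists true; apply: (@mX_inj R); by rewrite -H2 HY.
  - exists true; apply: (@mX_inj R); by rewrite -H2 HY.
  - exists false; apply: (@mX_inj R); by rewrite -H1 HX.
pose S (m : 'X_{1..2 * k ^ 2}) := forall u, (0 < m u)%N -> (u == i) || (u == j).
have key : forall w r s' m, S m -> (word_eval X Y w r s')@_m != 0 ->
    r = s' /\ (m = 0%MM \/ r = c).
  elim=> [|b w IH] r s' m Sm /=.
    rewrite /word_eval /= mxE mcoeffMn mcoeff1.
    case: (r =P s') => [<-|_]; last by rewrite mulr0n eqxx.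
    case: (m =P 0%MM) => [->|_]; first by move=> _; split; [|left].
    by rewrite mulr1n eqxx.
  rewrite mxE raddf_sum /= => H.
  have [a Ha] : exists a, ((if b then Y else X) r a * word_eval X Y w a s')@_m != 0.
    apply/existsP; apply: contraNT H => /existsPn Hn.
    by apply/eqP; apply: big1 => a _; apply/eqP; move: (Hn a); rewrite negbK.
  have Hv : (if b then Y else X) r a = 'X_(f (b, r, a)) by case: (b); rewrite /= ?HX ?HY.
  rewrite Hv in Ha; have [m' [Hm Hnz]] := @Xmul_nz R _ _ _ _ Ha.
  have Sm' : S m'.
    move=> u Hu; apply: Sm; rewrite Hm mnmDE; exact: leq_trans Hu (leq_addl _ _).
  have [b' Hb'] : exists b', f (b, r, a) = f (b', c, c).
    apply: Hij; apply: Sm; by rewrite Hm mnmDE mnm1E eqxx.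
  move/finj: Hb' => [_ Hr Ha'].
  have [Has _] := IH a s' m' Sm' Hnz.
  by split; [rewrite Hr -Has Ha' | right].
pose r := (pinv l).1; pose s' := (pinv l).2.
have Hl : pos (r, s') = l by rewrite /r /s' -surjective_pairing posK'.
move: hterm; rewrite -Hl -Hev /nc_eval.
rewrite summxE raddf_sum /= => H.
have [tt Htt] : exists tt : R * seq bool, ((tt.1%:MP *: word_eval X Y tt.2) r s')@_(mono2 i j s t) != 0.
  move: H; elim: (p) => [|a p' IH]; first by rewrite big_nil eqxx.
  rewrite big_cons.
  case: (boolP (((a.1%:MP *: word_eval X Y a.2) r s')@_(mono2 i j s t) != 0)) => [Ha _|]; first by exists a.
  by rewrite negbK => /eqP ->; rewrite add0r.
move: Htt; rewrite mxE mcoeffCM => Htt.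
have Hw : (word_eval X Y tt.2 r s')@_(mono2 i j s t) != 0.
  by apply: contraNN Htt => /eqP ->; rewrite mulr0.
have Smono : S (mono2 i j s t).
  move=> u; rewrite /mono2 mnmDE !mulmnE !mnm1E.
  by case: (i =P u) => [->|]; case: (j =P u) => [->|] //; rewrite eqxx ?orbT.
have [Hrs [Hm0|Hrc]] := key _ _ _ _ Smono Hw.
  exfalso; move: Hm0 => /mnmP /(_ i); rewrite /mono2 mnmDE !mulmnE !mnm1E eqxx mnmE.
  rewrite mul1n => /eqP; rewrite addn_eq0 => /andP [/eqP s0 _]; move: hs; by rewrite s0.
by rewrite -Hrc {2}Hrs.
Qed.
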